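(* Let $G$ be a loopless simple edge-coloured graph with $n$ vertices and $n$ colours in which every colour class has exactly $3$ edges. Let $N$ be the set of non-star vertices of $G$, and suppose $|N|\ge 8$. Then there exist distinct $x,y\in N$ such that no colour class of $G$ dominates $\{x,y\}$.
   Context: Graphs may have parallel edges. An edge-coloured graph is simple if no colour class (set of edges of one colour) contains two parallel edges. A colour class is a star class if its three edges form a star $K_{1,3}$ (three edges sharing a common vertex, the centre, with three distinct other ends). A vertex is a star vertex if it is the centre of some star class, and a non-star vertex otherwise. A colour class $A$ dominates a pair $\{x,y\}$ of vertices if every edge in $A$ has at least one end in $\{x,y\}$. *)

(* Defs.v *)
From mathcomp Require Import all_boot.
Set Implicit Arguments. Unset Strict Implicit. Unset Printing Implicit Defensive.

(* An edge-coloured multigraph: vertices V, edges E (a finite type, so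
   parallel edges are allowed), each edge e has endpoints (ends e).1,
   (ends e).2 and a colour col e. *)

Section ECGraph.
Variables (V E C : finType) (ends : E -> V * V) (col : E -> C).

Definition endset (e : E) : {set V} := [set (ends e).1; (ends e).2].

Definition loopless : Prop := forall e, (ends e).1 != (ends e).2.

Definition parallel (e f : E) : Prop := endset e = endset f.

Definition colour_simple : Prop :=
  forall e f, e != f -> col e = col f -> ~ parallel e f.

Definition colour_class (c : C) : {set E} := [set e | col e == c].

Definition star_class_centre (c : C) (v : V) : bool :=
  [&& #|colour_class c| == 3,
      [forall e in colour_class c, v \in endset e] &
      [forall e in colour_class c, forall f in colour_class c,
         (e != f) ==> (endset e :\ v != endset f :\ v)]].

Definition star_vertex (v : V) : bool := [exists c, star_class_centre c v].

Definition non_star_vertices : {set V} := [set v | ~~ star_vertex v].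

Definition dominates (c : C) (x y : V) : Prop :=
  forall e, e \in colour_class c -> (x \in endset e) \/ (y \in endset e).

End ECGraph.

(* Main.v *)
Require Import Defs.
From mathcomp Require Import all_boot.
Set Implicit Arguments. Unset Strict Implicit. Unset Printing Implicit Defensive.

Lemma sumb_card (T : finType) (P : pred T) : \sum_(y : T) (P y : nat) = #|P|.
Proof.
rewrite -sum1_card [RHS]big_mkcond; apply: eq_bigr => i _; by rewrite unfold_in; case: (P i).
Qed.

Lemma endset_pair (V E : finType) (ends : E -> V * V) e u v :
  u != v -> u \in endset ends e -> v \in endset ends e -> endset ends e = [set u; v].
Proof.
move=> uv hu hv; apply/eqP; rewrite eq_sym eqEcard; apply/andP; split.
  by apply/subsetP => z /set2P [] ->.
by rewrite cards2 uv /endset cards2; case: (_ != _).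
Qed.

Lemma L1 (V E C : finType) (ends : E -> V * V) (col : E -> C) c u v :
  colour_simple ends col -> u != v ->
  #|[set e in colour_class col c | (u \in endset ends e) && (v \in endset ends e)]| <= 1.
Proof.
move=> hs uv; rewrite leqNgt; apply/negP => /card_gt1P [e [f [he hf ef]]].
move: he hf; rewrite in_set => /andP[ce /andP[ue ve]]; rewrite in_set => /andP[cf /andP[uf vf]].
move: ce cf; rewrite /colour_class !in_set => /eqP ce /eqP cf.
apply: (hs e f ef); first by rewrite ce cf.
by rewrite /parallel (endset_pair uv ue ve) (endset_pair uv uf vf).
Qed.

Definition univ (V E C : finType) (ends : E -> V * V) (col : E -> C) c v :=
  [forall e in colour_class col c, v \in endset ends e].
Definition domb (V E C : finType) (ends : E -> V * V) (col : E -> C) c x y :=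
  [forall e in colour_class col c, (x \in endset ends e) || (y \in endset ends e)].

Lemma dombP (V E C : finType) (ends : E -> V * V) (col : E -> C) c x y :
  reflect (dominates ends col c x y) (domb ends col c x y).
Proof.
apply: (iffP forall_inP) => h e he; first by apply/orP; apply: h.
by apply/orP; apply: h.
Qed.

Lemma endset_card (V E : finType) (ends : E -> V * V) e : #|endset ends e| <= 2.
Proof. by rewrite /endset cards2; case: (_ != _). Qed.

Lemma univ_le1 (V E C : finType) (ends : E -> V * V) (col : E -> C) c :
  colour_simple ends col -> #|colour_class col c| = 3 ->
  #|[set v | univ ends col c v]| <= 1.
Proof.
move=> hs h3; rewrite leqNgt; apply/negP => /card_gt1P [u [v [hu hv uv]]].
move: hu hv; rewrite !in_set => /forall_inP hu /forall_inP hv.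
have := L1 c hs uv.
suff -> : [set e in colour_class col c | (u \in endset ends e) && (v \in endset ends e)]
   = colour_class col c by rewrite h3.
apply/setP => e; rewrite in_set; case he: (e \in colour_class col c) => //=.
by rewrite hu ?hv.
Qed.

Lemma univ_star (V E C : finType) (ends : E -> V * V) (col : E -> C) c v :
  colour_simple ends col -> #|colour_class col c| = 3 ->
  univ ends col c v -> star_class_centre ends col c v.
Proof.
move=> hs h3 hu; rewrite /star_class_centre h3 eqxx /=; apply/andP; split; first exact: hu.
apply/forall_inP => e he; apply/forall_inP => f hf; apply/implyP => ef.
apply/negP => /eqP hD.
move: (hu) => /forall_inP hu'.
have ee := setD1K (hu' e he); have ff := setD1K (hu' f hf).
apply: (hs e f ef).
  by move: he hf; rewrite /colour_class !in_set => /eqP -> /eqP ->.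
by rewrite /parallel -ee -ff hD.
Qed.

Lemma bad_nodom (V E C : finType) (ends : E -> V * V) (col : E -> C) c v x y :
  colour_simple ends col -> #|colour_class col c| = 3 ->
  univ ends col c v -> x != v -> y != v -> ~~ domb ends col c x y.
Proof.
move=> hs h3 hu xv yv; apply/negP => /forall_inP hd.
move: hu => /forall_inP hu.
have h1 := L1 c hs xv; have h2 := L1 c hs yv.
set A := [set e in colour_class col c | (x \in endset ends e) && (v \in endset ends e)].
set B := [set e in colour_class col c | (y \in endset ends e) && (v \in endset ends e)].
have hsub : colour_class col c \subset A :|: B.
  apply/subsetP => e he; move: (hd e he) (hu e he) (he); rewrite !inE.
  by move=> /orP[]-> -> ->; rewrite ?orbT.
have := leq_trans (subset_leq_card hsub) (leq_card_setU A B).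
rewrite h3 => h; have := leq_trans h (leq_add h1 h2); by [].
Qed.

From mathcomp Require Import zify.

Lemma good_deg (V E C : finType) (ends : E -> V * V) (col : E -> C) c x :
  colour_simple ends col -> #|colour_class col c| = 3 ->
  ~~ [exists w, univ ends col c w] ->
  #|[set y | (y != x) && domb ends col c x y]| <=
  #|[set e in colour_class col c | x \in endset ends e]|.
Proof.
move=> hs h3 hg.
set cls := colour_class col c.
set A := [set e in cls | x \in endset ends e].
set B := [set e in cls | x \notin endset ends e].
set I := [set y | (y != x) && [forall e in B, y \in endset ends e]].
have hDI : #|[set y | (y != x) && domb ends col c x y]| <= #|I|.
  apply: subset_leq_card; apply/subsetP => y; rewrite !in_set => /andP[-> /forall_inP hd] /=.
  apply/forall_inP => e; rewrite in_set => /andP[he hxe].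
  by case/orP: (hd e he) => // hx; rewrite hx in hxe.
have hBs : B \subset cls by apply/subsetP => e; rewrite in_set => /andP[].
have hAB : #|A| + #|B| = 3.
  rewrite -h3 -cardsUI.
  have -> : A :&: B = set0.
    by apply/setP => e; rewrite !inE; case: (col e == c); case: ((x == _) || _).
  have -> : A :|: B = cls.
    by apply/setP => e; rewrite !inE; case: (col e == c); case: ((x == _) || _).
  by rewrite cards0 addn0.
have hB0 : 0 < #|B|.
  rewrite lt0n; apply/negP => /eqP /cards0_eq hB.
  move/negP: hg; apply; apply/existsP; exists x; apply/forall_inP => e he.
  apply/negPn/negP => hxe.
  have : e \in B by rewrite in_set he hxe.
  by rewrite hB in_set0.
have hI2 : #|I| <= 2.
  case/card_gt0P: hB0 => e he.
  apply: leq_trans (endset_card ends e).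
  apply: subset_leq_card; apply/subsetP => y; rewrite in_set => /andP[_ /forall_inP h].
  exact: h.
have hI1 : 1 < #|B| -> #|I| <= 1.
  case/card_gt1P => e [f [he hf ef]].
  rewrite leqNgt; apply/negP => /card_gt1P [y [y' [hy hy' yy]]].
  have := L1 c hs yy; rewrite leqNgt => /negP; apply; apply/card_gt1P.
  rewrite !in_set in hy hy'; case/andP: hy => _ /forall_inP hy; case/andP: hy' => _ /forall_inP hy'.
  exists e, f; split => //.
    by rewrite in_set (subsetP hBs e he) hy ?hy'.
  by rewrite in_set (subsetP hBs f hf) hy ?hy'.
have hI0 : 2 < #|B| -> #|I| = 0.
  move=> hB2; apply/eqP; rewrite cards_eq0; apply/eqP/setP => y; rewrite in_set0.
  apply/negP; rewrite in_set => /andP[_ /forall_inP hy].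
  have hBc : B = cls.
    apply/eqP; rewrite eqEcard hBs /=; rewrite -/cls in h3; rewrite h3.
    by move: (subset_leq_card hBs); rewrite -/cls h3 => ?; lia.
  move/negP: hg; apply; apply/existsP; exists y; apply/forall_inP => e he.
  by apply: hy; rewrite hBc.
lia.
Qed.

Lemma card_sum (T : finType) (A : {set T}) : #|A| = \sum_(e : T) (e \in A : nat).
Proof.
by rewrite -sum1_card [LHS]big_mkcond; apply: eq_bigr => i _; case: (i \in A).
Qed.

Lemma sum_deg (V E C : finType) (ends : E -> V * V) (col : E -> C) c :
  #|colour_class col c| = 3 ->
  \sum_(x : V) #|[set e in colour_class col c | x \in endset ends e]| <= 6.
Proof.
move=> h3.
rewrite (eq_bigr (fun x => \sum_(e : E) (e \in [set e in colour_class col c | x \in endset ends e] : nat)));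
  last by move=> x _; rewrite card_sum.
rewrite exchange_big /=.
apply: (@leq_trans (\sum_(e : E) ((e \in colour_class col c) : nat) * 2)).
  apply: leq_sum => e _.
  case he: (e \in colour_class col c); last first.
    by rewrite big1 // => x _; rewrite in_set he.
  rewrite mul1n; apply: leq_trans (endset_card ends e); rewrite card_sum.
  by apply: eq_leq; apply: eq_bigr => x _; rewrite in_set he.
by rewrite -big_distrl /= -card_sum h3.
Qed.
Theorem claim3p6 (n : nat) (V E C : finType) (ends : E -> V * V) (col : E -> C) :
  #|V| = n -> #|C| = n ->
  loopless ends -> colour_simple ends col ->
  (forall c : C, #|colour_class col c| = 3) ->
  8 <= #|non_star_vertices ends col| ->
  exists x y : V,
    [/\ x != y, x \in non_star_vertices ends col, y \in non_star_vertices ends col &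
        forall c : C, ~ dominates ends col c x y].
Proof.
move=> hV hC hl hs h3 h8.
set N := non_star_vertices ends col.
case: (boolP [exists x, exists y, [&& x != y, x \in N, y \in N & [forall c, ~~ domb ends col c x y]]]).
  case/existsP => x /existsP [y /and4P [xy xN yN /forallP hc]]; exists x, y; split => // c.
  by move=> /dombP h; move: (hc c); rewrite h.
move=> hno; exfalso.
have hcov : forall x y, [&& x \in N, y \in N & x != y] -> exists c, domb ends col c x y.
  move=> x y /and3P [xN yN xy].
  case: (boolP [exists c, domb ends col c x y]) => [/existsP //|/existsPn hn].
  move/negP: hno; case; apply/existsP; exists x; apply/existsP; exists y.
  by rewrite xy xN yN /=; apply/forallP.
have starN : forall w c, univ ends col c w -> w \notin N.
  move=> w c hw; rewrite in_set negbK; apply/existsP; exists c.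
  exact: univ_star.
set Gs := [set c | ~~ [exists w, univ ends col c w]].
pose f c x y : nat := [&& x \in N, y \in N, x != y & domb ends col c x y].
have s1 : #|N| * (#|N| - 1) = \sum_(x : V) \sum_(y : V) ([&& x \in N, y \in N & x != y] : nat).
  rewrite (eq_bigr (fun x => (x \in N : nat) * (#|N| - 1))); last first.
    move=> x _; case hx: (x \in N); last by rewrite big1.
    rewrite mul1n (cardsD1 x N) hx add1n subn1 /= card_sum; apply: eq_bigr => y _.
    by rewrite in_setD1 eq_sym andbC.
  by rewrite -big_distrl /= -card_sum.
have s2 : \sum_(x : V) \sum_(y : V) ([&& x \in N, y \in N & x != y] : nat)
          <= \sum_(c : C) \sum_(x : V) \sum_(y : V) f c x y.
  apply: leq_trans (_ : _ <= \sum_(x : V) \sum_(c : C) \sum_(y : V) f c x y) _; last first.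
    by rewrite exchange_big.
  apply: leq_sum => x _; rewrite [X in _ <= X]exchange_big /=; apply: leq_sum => y _.
  case hb: [&& x \in N, y \in N & x != y] => //.
  case: (hcov x y hb) => c0 hc0.
  rewrite (bigD1 c0) //= /f; move: hb => /and3P [-> -> ->]; rewrite hc0.
  by [].
have s3 : \sum_(c : C) \sum_(x : V) \sum_(y : V) f c x y <= \sum_(c : C) (c \in Gs : nat) * 6.
  apply: leq_sum => c _.
  case hg: (c \in Gs); last first.
    move: hg; rewrite in_set negbK => /existsP [w hw].
    rewrite big1 // => x _; rewrite big1 // => y _; rewrite /f.
    case xN: (x \in N) => //; case yN: (y \in N) => //=.
    have hw' := starN w c hw.
    rewrite (negbTE (bad_nodom hs (h3 c) hw _ _)) ?andbF //.
      by apply/negP => /eqP e; move: hw'; rewrite -e xN.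
    by apply/negP => /eqP e; move: hw'; rewrite -e yN.
  rewrite mul1n; apply: leq_trans (sum_deg ends (h3 c)).
  apply: leq_sum => x _.
  apply: leq_trans (good_deg x hs (h3 c) _); last by move: hg; rewrite in_set.
  rewrite card_sum; apply: leq_sum => y _; rewrite /f in_set.
  by case: (x \in N); case: (y \in N); rewrite /= ?[x == y]eq_sym.
have s4 : \sum_(c : C) (c \in Gs : nat) * 6 = #|Gs| * 6.
  by rewrite -big_distrl /= -card_sum.
have s5 : #|~: N| <= #|~: Gs|.
  rewrite card_sum.
  apply: (@leq_trans (\sum_(v : V) \sum_(c : C) ((c \in ~: Gs) && univ ends col c v : nat))).
    apply: leq_sum => v _.
    case hv: (v \in ~: N) => //.
    move: hv; rewrite in_setC in_set negbK => /existsP [c hc].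
    rewrite (bigD1 c) //=.
    have hu : univ ends col c v by case/and3P: hc.
    rewrite in_setC in_set negbK hu /=; suff -> : [exists w, univ ends col c w] by []. by apply/existsP; exists v.
  rewrite exchange_big /= card_sum; apply: leq_sum => c _.
  case hc: (c \in ~: Gs); last by rewrite big1.
  apply: leq_trans (univ_le1 hs (h3 c)).
  by rewrite card_sum; apply: eq_leq; apply: eq_bigr => v _; rewrite in_set.
have c1 := cardsC N; have c2 := cardsC Gs.
rewrite hV in c1; rewrite hC in c2.
have := leq_trans s2 s3; rewrite s4 -s1 => hh.
have hG : #|Gs| <= #|N| by lia.
have : #|N| * (#|N| - 1) <= #|N| * 6 by apply: (leq_trans hh); apply: leq_mul hG (leqnn 6).
rewrite leq_pmul2l; last by apply: leq_trans h8.
move: h8; rewrite -/N; lia.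
Qed.
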